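(* Let $X,Y$ be compact metric spaces, $\epsilon\ge0$, and $X_\epsilon, Y_\epsilon$ finite $\epsilon$-nets of $X$ and $Y$. Let $f:X_\epsilon\to Y_\epsilon$ and $g:Y_\epsilon\to X_\epsilon$ satisfy $\frac12\max\{\operatorname{dis}(f),\operatorname{dis}(g)\}=\widehat{d}_{\mathrm{GH}}(X_\epsilon,Y_\epsilon)$. Define subsets $X_k\subseteq X_\epsilon$ by $X_0=X_\epsilon$, $X_1=g(Y_\epsilon)$, $X_k=(g\circ f)(X_{k-2})$ for $k>1$ (with the restricted metric). Let $\delta\ge0$. If $d_{\mathrm{GH}}(X_k,X_{k+1})\le\delta$ for some $k\ge0$, then $d_{\mathrm{GH}}(X,Y)\le(2k+1)\widehat{d}_{\mathrm{GH}}(X,Y)+(2k+2)\epsilon+\delta$.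
   Context: An $\epsilon$-net of $X$ is a subset such that every point of $X$ is within distance $\le\epsilon$ of it. For $f:X\to Y$, $\operatorname{dis}(f)=\sup_{x,x'}|d_X(x,x')-d_Y(f(x),f(x'))|$; $\operatorname{codis}(f,g)=\sup_{x,y}|d_X(x,g(y))-d_Y(f(x),y)|$. $d_{\mathrm{GH}}$ is the Gromov--Hausdorff distance, equal to $\frac12\inf_{f,g}\max\{\operatorname{dis}(f),\operatorname{dis}(g),\operatorname{codis}(f,g)\}$; $\widehat{d}_{\mathrm{GH}}(X,Y)=\frac12\max\{\inf_{f:X\to Y}\operatorname{dis}(f),\inf_{g:Y\to X}\operatorname{dis}(g)\}$. *)

(* Defs.v *)
From HB Require Import structures.
From mathcomp Require Import all_boot all_order all_algebra.
From mathcomp Require Import all_classical all_reals all_analysis.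
Unset Printing Implicit Defensive.
Import Order.TTheory GRing.Theory Num.Theory numFieldNormedType.Exports.
Local Open Scope classical_set_scope.
Local Open Scope ring_scope.

Section GH.
Variable R : realType.

Definition is_metric {T : Type} (d : T -> T -> R) : Prop :=
  (forall x y, d x y = 0 <-> x = y) /\
  (forall x y, d x y = d y x) /\
  (forall x y z, d x z <= d x y + d y z).

(* compactness of the metric space (T, d) (sequential compactness,
   equivalent to compactness for metric spaces) *)
Definition metric_compact {T : Type} (d : T -> T -> R) : Prop :=
  forall u : nat -> T, exists (phi : nat -> nat) (x : T),
    (forall n, (phi n < phi n.+1)%N) /\
    ((fun n : nat => d (u (phi n)) x) @ \oo --> (0 : R^o)).

Definition is_enet {T : Type} (d : T -> T -> R) (N : set T) (eps : R) : Prop :=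
  forall x, exists2 y, N y & d x y <= eps.

Definition GHsub {T : Type} (A : set T) := {x : T | A x}.
Definition GHrestr {T : Type} (d : T -> T -> R) (A : set T) (a b : GHsub A) : R :=
  d (proj1_sig a) (proj1_sig b).

(* distortion; the sup includes 0 so that the empty map has distortion 0 *)
Definition GHdis {T U : Type} (dT : T -> T -> R) (dU : U -> U -> R) (f : T -> U)
  : \bar R :=
  ereal_sup ([set 0%E] `|`
    [set e | exists x x', e = (`|dT x x' - dU (f x) (f x')|)%:E]).

Definition GHcodis {T U : Type} (dT : T -> T -> R) (dU : U -> U -> R)
  (f : T -> U) (g : U -> T) : \bar R :=
  ereal_sup ([set 0%E] `|`
    [set e | exists x y, e = (`|dT x (g y) - dU (f x) y|)%:E]).

Definition dGH {T U : Type} (dT : T -> T -> R) (dU : U -> U -> R) : \bar R :=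
  ((2^-1)%:E * ereal_inf [set e | exists (f : T -> U) (g : U -> T),
     e = maxe (GHdis dT dU f) (maxe (GHdis dU dT g) (GHcodis dT dU f g))])%E.

Definition hdGH {T U : Type} (dT : T -> T -> R) (dU : U -> U -> R) : \bar R :=
  ((2^-1)%:E * maxe (ereal_inf [set GHdis dT dU f | f in [set: T -> U]])
                    (ereal_inf [set GHdis dU dT g | g in [set: U -> T]]))%E.

(* (X_k, X_{k+1}) : X_0 = setT, X_1 = g(setT), X_{k+2} = (g \o f)(X_k) *)
Fixpoint GHXpair {A B : Type} (f : A -> B) (g : B -> A) (k : nat)
  : set A * set A :=
  match k with
  | 0 => (setT, g @` setT)
  | k'.+1 => let p := GHXpair f g k' in (p.2, (g \o f) @` p.1)
  end.
Definition GHXk {A B : Type} (f : A -> B) (g : B -> A) (k : nat) : set A :=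
  (GHXpair f g k).1.

End GH.
Arguments is_metric {R T}.
Arguments metric_compact {R T}.
Arguments is_enet {R T}.
Arguments GHrestr {R T}.
Arguments GHdis {R T U}.
Arguments GHcodis {R T U}.
Arguments dGH {R T U}.
Arguments hdGH {R T U}.

(* Main.v *)
Require Import Defs.
From HB Require Import structures.
From mathcomp Require Import all_boot all_order all_algebra.
From mathcomp Require Import all_classical all_reals all_analysis.
From mathcomp Require Import lra.
Import Order.TTheory GRing.Theory Num.Theory.
Local Open Scope classical_set_scope.
Local Open Scope ring_scope.

Section Aux.
Context {R : realType}.

Definition Coup {U V : Type} (dU : U -> U -> R) (dV : V -> V -> R) (r : R) : Prop :=
  exists (P : U -> V) (Q : V -> U),
    [/\ (forall x x', `|dU x x' - dV (P x) (P x')| <= r),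
        (forall y y', `|dV y y' - dU (Q y) (Q y')| <= r) &
        (forall x y, `|dU x (Q y) - dV (P x) y| <= r)].

Lemma coup_comp {U V W : Type} (dU : U -> U -> R) (dV : V -> V -> R)
  (dW : W -> W -> R) a b :
  Coup dU dV a -> Coup dV dW b -> Coup dU dW (a + b).
Proof.
move=> [P1 [Q1 [h1 h2 h3]]] [P2 [Q2 [k1 k2 k3]]].
exists (P2 \o P1), (Q1 \o Q2); split => /=.
- move=> x x'; apply: le_trans (ler_distD (dV (P1 x) (P1 x')) _ _) _.
  exact: lerD.
- move=> y y'; apply: le_trans (ler_distD (dV (Q2 y) (Q2 y')) _ _) _.
  by rewrite addrC; apply: lerD.
- move=> x y; apply: le_trans (ler_distD (dV (P1 x) (Q2 y)) _ _) _.
  exact: lerD.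
Qed.

Lemma coup_sym {U V : Type} (dU : U -> U -> R) (dV : V -> V -> R) a :
  (forall x y, dU x y = dU y x) -> (forall x y, dV x y = dV y x) ->
  Coup dU dV a -> Coup dV dU a.
Proof.
move=> sU sV [P [Q [h1 h2 h3]]]; exists Q, P; split => //.
by move=> y x; rewrite sU sV distrC.
Qed.

Lemma coup_surj {U W : Type} (dU : U -> U -> R) (dW : W -> W -> R)
  (S : set W) (s : U -> W) (hs : forall u, S (s u))
  (hsurj : forall w, S w -> exists u, s u = w) a :
  (forall u u', `|dU u u' - dW (s u) (s u')| <= a) ->
  Coup dU (GHrestr dW S) a.
Proof.
move=> hd.
pose P (u : U) : GHsub S := exist _ (s u) (hs u).
have hQ : forall w : GHsub S, {u | s u = proj1_sig w}.
  move=> w; apply: cid; exact: hsurj (proj2_sig w).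
pose Q w := proj1_sig (hQ w).
have sQ : forall w, s (Q w) = proj1_sig w by move=> w; exact: proj2_sig (hQ w).
exists P, Q; split; rewrite /GHrestr /=.
- exact: hd.
- by move=> y y'; rewrite -!sQ distrC.
- by move=> x y; rewrite -sQ.
Qed.

Lemma dis_comp {U V W : Type} (dU : U -> U -> R) (dV : V -> V -> R)
  (dW : W -> W -> R) (s1 : U -> V) (s2 : V -> W) a b :
  (forall u u', `|dU u u' - dV (s1 u) (s1 u')| <= a) ->
  (forall u u', `|dV u u' - dW (s2 u) (s2 u')| <= b) ->
  (forall u u', `|dU u u' - dW (s2 (s1 u)) (s2 (s1 u'))| <= a + b).
Proof.
move=> h1 h2 u u'; apply: le_trans (ler_distD (dV (s1 u) (s1 u')) _ _) _.
exact: lerD.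
Qed.

Lemma metric_dist2 {T : Type} {d : T -> T -> R} : is_metric d ->
  forall x y x' y', `|d x y - d x' y'| <= d x x' + d y y'.
Proof.
move=> [h0 [hs ht]] x y x' y'.
rewrite ler_norml; apply/andP; split.
- have := ht x' x y'; have := ht x y y'; rewrite (hs x' x); lra.
- have := ht x x' y; have := ht x' y' y; rewrite (hs y' y); lra.
Qed.


Definition netp {T : Type} {d : T -> T -> R} {N : set T} {eps : R}
  (h : is_enet d N eps) (x : T) : GHsub N :=
  let w := cid2 (h x) in exist _ (s2val w) (s2valP w).

Lemma netpP {T : Type} {d : T -> T -> R} {N : set T} {eps : R}
  (h : is_enet d N eps) x : d x (proj1_sig (netp h x)) <= eps.
Proof. by rewrite /netp /=; case: (cid2 (h x)). Qed.

Lemma coup_nets {TX TY : Type} (dX : TX -> TX -> R) (dY : TY -> TY -> R)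
  (mX : is_metric dX) (mY : is_metric dY) eps Xe Ye
  (nX : is_enet dX Xe eps) (nY : is_enet dY Ye eps) r :
  Coup (GHrestr dX Xe) (GHrestr dY Ye) r -> Coup dX dY (r + 2 * eps).
Proof.
move=> [P [Q [h1 h2 h3]]].
have [X0 [Xs _]] := mX; have [Y0 [Ys _]] := mY.
exists (fun x => proj1_sig (P (netp nX x))), (fun y => proj1_sig (Q (netp nY y))).
split.
- move=> x x'; move: (netpP nX x) (netpP nX x'); move: (netp nX x) (netp nX x') => p p' e1 e2.
  have := metric_dist2 mX x x' (proj1_sig p) (proj1_sig p').
  have := h1 p p'; rewrite /GHrestr => H1 H2.
  apply: le_trans (ler_distD (dX (proj1_sig p) (proj1_sig p')) _ _) _.
  lra.
- move=> y y'; move: (netpP nY y) (netpP nY y'); move: (netp nY y) (netp nY y') => p p' e1 e2.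
  have := metric_dist2 mY y y' (proj1_sig p) (proj1_sig p').
  have := h2 p p'; rewrite /GHrestr => H1 H2.
  apply: le_trans (ler_distD (dY (proj1_sig p) (proj1_sig p')) _ _) _.
  lra.
- move=> x y; move: (netpP nX x) (netpP nY y); move: (netp nX x) (netp nY y) => p q e1 e2.
  have := h3 p q; rewrite /GHrestr => H1.
  have H2 := metric_dist2 mX x (proj1_sig (Q q)) (proj1_sig p) (proj1_sig (Q q)).
  have H3 := metric_dist2 mY (proj1_sig (P p)) (proj1_sig q) (proj1_sig (P p)) y.
  have Y00 : dY (proj1_sig (P p)) (proj1_sig (P p)) = 0 by apply/Y0.
  have X00 : dX (proj1_sig (Q q)) (proj1_sig (Q q)) = 0 by apply/X0.
  rewrite X00 in H2; rewrite Y00 (Ys (sval q) y) in H3.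
  apply: le_trans (ler_distD (dX (proj1_sig p) (proj1_sig (Q q))) _ _) _.
  apply: le_trans (lerD (lexx _) (ler_distD (dY (proj1_sig (P p)) (proj1_sig q)) _ _)) _.
  lra.
Qed.

Lemma GHdis_le {U V : Type} (dU : U -> U -> R) (dV : V -> V -> R) (P : U -> V) r :
  0 <= r -> (forall x x', `|dU x x' - dV (P x) (P x')| <= r) ->
  (GHdis dU dV P <= r%:E)%E.
Proof.
move=> r0 h; apply: ge_ereal_sup => e [->|[x [x' ->]]]; by rewrite lee_fin.
Qed.

Lemma GHdis_ge {U V : Type} (dU : U -> U -> R) (dV : V -> V -> R) (P : U -> V) x x' :
  ((`|dU x x' - dV (P x) (P x')|)%:E <= GHdis dU dV P)%E.
Proof. by apply: ereal_sup_ubound; right; exists x, x'. Qed.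

Lemma GHdis_ge0 {U V : Type} (dU : U -> U -> R) (dV : V -> V -> R) (P : U -> V) :
  (0 <= GHdis dU dV P)%E.
Proof. by apply: ereal_sup_ubound; left. Qed.

Lemma dGH_le {U V : Type} (dU : U -> U -> R) (dV : V -> V -> R) r :
  0 <= r -> Coup dU dV r -> (dGH dU dV <= (r / 2)%:E)%E.
Proof.
move=> r0 [P [Q [h1 h2 h3]]].
rewrite /dGH lee_pdivrMl // -EFinM mulrC divfK ?pnatr_eq0 //.
apply: le_trans (ereal_inf_lbound _) _.
  by exists P, Q.
rewrite !ge_max !GHdis_le //=.
apply: ge_ereal_sup => e [->|[x [y ->]]]; by rewrite lee_fin // h3.
Qed.


Lemma coup_of_dGH {U V : Type} (dU : U -> U -> R) (dV : V -> V -> R) (del t : R) :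
  (dGH dU dV <= del%:E)%E -> 0 < t -> Coup dU dV (2 * del + t).
Proof.
move=> H t0; rewrite /dGH lee_pdivrMl // in H.
have : (ereal_inf [set e | exists (f : U -> V) (g : V -> U),
     e = maxe (GHdis dU dV f) (maxe (GHdis dV dU g) (GHcodis dU dV f g))]
     < (2 * del + t)%:E)%E.
  by apply: le_lt_trans H _; rewrite -EFinM lte_fin ltrDl.
move=> /ereal_inf_lt [e [P [Q ->]]].
rewrite !gt_max => /and3P [H1 H2 H3].
exists P, Q; split.
- move=> x x'; rewrite -lee_fin; apply/ltW/(le_lt_trans _ H1); exact: GHdis_ge.
- move=> x x'; rewrite -lee_fin; apply/ltW/(le_lt_trans _ H2); exact: GHdis_ge.
- move=> x y; rewrite -lee_fin; apply/ltW/(le_lt_trans _ H3).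
  by apply: ereal_sup_ubound; right; exists x, y.
Qed.


Lemma GHXpair_even {A B : Type} (f : A -> B) (g : B -> A) m :
  GHXpair f g m.*2 = (iter m (g \o f) @` setT, (g \o iter m (f \o g)) @` setT).
Proof.
elim: m => [|m IH] /=.
  by rewrite image_id.
by rewrite IH /= !image_comp.
Qed.

Lemma GHXk_even {A B : Type} (f : A -> B) (g : B -> A) m :
  GHXk f g m.*2 = iter m (g \o f) @` setT.
Proof. by rewrite /GHXk GHXpair_even. Qed.

Lemma GHXk_odd {A B : Type} (f : A -> B) (g : B -> A) m :
  GHXk f g m.*2.+1 = (g \o iter m (f \o g)) @` setT.
Proof. by rewrite /GHXk /= GHXpair_even. Qed.

Lemma dis_iter {U : Type} (dU : U -> U -> R) (h : U -> U) (c : R) m :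
  (forall u u', `|dU u u' - dU (h u) (h u')| <= c) ->
  (forall u u', `|dU u u' - dU (iter m h u) (iter m h u')| <= m%:R * c).
Proof.
move=> hc; elim: m => [|m IH] u u' /=.
  by rewrite subrr normr0 mul0r.
rewrite -[m.+1]addn1 natrD mulrDl mul1r.
exact: (@dis_comp _ _ _ dU dU dU (iter m h) h _ _ IH hc u u').
Qed.

Lemma coup_from_map {U W : Type} (dU : U -> U -> R) (dW : W -> W -> R)
  (s : U -> W) a :
  (forall u u', `|dU u u' - dW (s u) (s u')| <= a) ->
  Coup dU (GHrestr dW (s @` setT)) a.
Proof.
move=> h; apply: coup_surj h.
- by move=> u; exists u.
- by move=> w [u _ <-]; exists u.
Qed.


Lemma half_bound {TX TY : Type} (dX : TX -> TX -> R) (dY : TY -> TY -> R)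
  (mY : is_metric dY) (Xe : set TX) (Ye : set TY) (eps : R) (heps : 0 <= eps)
  (nY : is_enet dY Ye eps) (m t : R) (m0 : 0 <= m) (t0 : 0 < t)
  (hI : (ereal_inf [set GHdis dX dY φ | φ in [set: TX -> TY]] <= m%:E)%E) :
  (ereal_inf [set GHdis (GHrestr dX Xe) (GHrestr dY Ye) φ | φ in [set: GHsub Xe -> GHsub Ye]]
     <= (m + 2 * eps + t)%:E)%E.
Proof.
have : (ereal_inf [set GHdis dX dY φ | φ in [set: TX -> TY]] < (m + t)%:E)%E.
  by apply: le_lt_trans hI _; rewrite lte_fin ltrDl.
move=> /ereal_inf_lt [_ [φ _ <-] Hφ].
apply: le_trans (ereal_inf_lbound _) _.
  by exists (fun a => netp nY (φ (proj1_sig a))).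
apply: GHdis_le; first lra.
move=> a a'; rewrite /GHrestr.
have Hp := metric_dist2 mY (φ (proj1_sig a)) (φ (proj1_sig a'))
   (proj1_sig (netp nY (φ (proj1_sig a)))) (proj1_sig (netp nY (φ (proj1_sig a')))).
have e1 := netpP nY (φ (proj1_sig a)); have e2 := netpP nY (φ (proj1_sig a')).
have H1 : `|dX (proj1_sig a) (proj1_sig a') - dY (φ (proj1_sig a)) (φ (proj1_sig a'))| <= m + t.
  rewrite -lee_fin; apply: le_trans (GHdis_ge _ _ _ _ _) (ltW Hφ).
apply: le_trans (ler_distD (dY (φ (proj1_sig a)) (φ (proj1_sig a'))) _ _) _.
lra.
Qed.

Lemma opt_bound {TX TY : Type} (dX : TX -> TX -> R) (dY : TY -> TY -> R)
  (mX : is_metric dX) (mY : is_metric dY) (eps : R) (heps : 0 <= eps)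
  (Xe : set TX) (Ye : set TY)
  (nX : is_enet dX Xe eps) (nY : is_enet dY Ye eps)
  (f : GHsub Xe -> GHsub Ye) (g : GHsub Ye -> GHsub Xe) (m : R) (m0 : 0 <= m)
  (hM : maxe (ereal_inf [set GHdis dX dY φ | φ in [set: TX -> TY]])
             (ereal_inf [set GHdis dY dX ψ | ψ in [set: TY -> TX]]) = m%:E)
  (hopt : ((2^-1)%:E * maxe (GHdis (GHrestr dX Xe) (GHrestr dY Ye) f)
                            (GHdis (GHrestr dY Ye) (GHrestr dX Xe) g)
           = hdGH (GHrestr dX Xe) (GHrestr dY Ye))%E) :
  (forall a a', `|GHrestr dX Xe a a' - GHrestr dY Ye (f a) (f a')| <= m + 2 * eps) /\
  (forall b b', `|GHrestr dY Ye b b' - GHrestr dX Xe (g b) (g b')| <= m + 2 * eps).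
Proof.
have hmax := congr1 (fun z => (2%:E * z)%E) hopt.
rewrite /hdGH /= !muleA -EFinM divff // !mul1e in hmax.
have hJ : forall t, 0 < t -> (maxe (GHdis (GHrestr dX Xe) (GHrestr dY Ye) f)
                            (GHdis (GHrestr dY Ye) (GHrestr dX Xe) g) <= (m + 2 * eps + t)%:E)%E.
  move=> t t0; rewrite hmax ge_max; apply/andP; split.
  - apply: half_bound => //; rewrite -hM le_max lexx //.
  - apply: half_bound => //; rewrite -hM le_max lexx orbT //.
split.
- move=> a a'; apply/ler_addgt0Pr => t t0; rewrite -lee_fin.
  apply: le_trans (GHdis_ge _ _ _ _ _) _; apply: le_trans (hJ t t0).
  by rewrite le_max lexx.
- move=> a a'; apply/ler_addgt0Pr => t t0; rewrite -lee_fin.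
  apply: le_trans (GHdis_ge _ _ _ _ _) _; apply: le_trans (hJ t t0).
  by rewrite le_max lexx orbT.
Qed.

End Aux.
Arguments coup_comp {R U V W dU dV dW a b}.
Arguments coup_sym {R U V dU dV a}.
Arguments coup_of_dGH {R U V dU dV del t}.
Arguments coup_nets {R TX TY dX dY} mX mY {eps Xe Ye} nX nY {r}.
Arguments dGH_le {R U V dU dV r}.

Theorem claim3 (R : realType) (TX TY : Type)
  (dX : TX -> TX -> R) (dY : TY -> TY -> R)
  (mX : is_metric dX) (mY : is_metric dY)
  (cX : metric_compact dX) (cY : metric_compact dY)
  (eps : R) (heps : 0 <= eps)
  (Xe : set TX) (Ye : set TY) (fXe : finite_set Xe) (fYe : finite_set Ye)
  (nX : is_enet dX Xe eps) (nY : is_enet dY Ye eps)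
  (f : GHsub Xe -> GHsub Ye) (g : GHsub Ye -> GHsub Xe)
  (hopt : ((2^-1)%:E * maxe (GHdis (GHrestr dX Xe) (GHrestr dY Ye) f)
                            (GHdis (GHrestr dY Ye) (GHrestr dX Xe) g)
           = hdGH (GHrestr dX Xe) (GHrestr dY Ye))%E)
  (delta : R) (hdelta : 0 <= delta) (k : nat)
  (hk : (dGH (GHrestr (GHrestr dX Xe) (GHXk f g k))
             (GHrestr (GHrestr dX Xe) (GHXk f g k.+1)) <= delta%:E)%E) :
  (dGH dX dY <= ((2 * k + 1)%:R)%:E * hdGH dX dY
                + ((2 * k + 2)%:R * eps + delta)%:E)%E.
Proof.
have [_ [sX _]] := mX; have [_ [sY _]] := mY.
have sA : forall (S : set (GHsub Xe)) a b,
    GHrestr (GHrestr dX Xe) S a b = GHrestr (GHrestr dX Xe) S b a.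
  by move=> S a b; rewrite /GHrestr sX.
have sA' : forall a b, GHrestr dX Xe a b = GHrestr dX Xe b a.
  by move=> a b; rewrite /GHrestr sX.
have sB : forall a b, GHrestr dY Ye a b = GHrestr dY Ye b a.
  by move=> a b; rewrite /GHrestr sY.
have I10 : (0 <= ereal_inf [set GHdis dX dY φ | φ in [set: TX -> TY]])%E.
  by apply/ereal_infP => _ [φ _ <-]; exact: GHdis_ge0.
rewrite /hdGH.
case hM: (maxe (ereal_inf [set GHdis dX dY φ | φ in [set: TX -> TY]])
               (ereal_inf [set GHdis dY dX ψ | ψ in [set: TY -> TX]])) => [m| |].
- have m0 : 0 <= m.
    rewrite -lee_fin -hM; apply: le_trans I10 _; by rewrite le_max lexx.
  have [hf hg] := @opt_bound R _ _ dX dY mX mY eps heps Xe Ye nX nY f g m m0 hM hopt.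
  rewrite -!EFinM -EFinD.
  apply/lee_addgt0Pr => t t0.
  set c := m + 2 * eps.
  have c0 : 0 <= c by rewrite /c; lra.
  have hgf := @dis_comp R _ _ _ _ _ _ f g _ _ hf hg.
  have hfg := @dis_comp R _ _ _ _ _ _ g f _ _ hg hf.
  have [j [kE|kE]] : exists j, k = j.*2 \/ k = j.*2.+1.
    exists k./2; case ok: (odd k); [right|left];
      by rewrite -[k in LHS]odd_double_half ok.
  + rewrite kE GHXk_even GHXk_odd in hk.
    have C1 := @coup_from_map R _ _ _ _ _ _ (@dis_iter R _ _ (g \o f) (c + c) j hgf).
    have C2 := coup_of_dGH hk t0.
    have C3 := @coup_from_map R _ _ _ _ _ _
      (@dis_comp R _ _ _ _ _ _ _ g _ _ (@dis_iter R _ _ (f \o g) (c + c) j hfg) hg).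
    have C3' := coup_sym sB (sA _) C3.
    have C := coup_nets mX mY nX nY (coup_comp (coup_comp C1 C2) C3').
    apply: le_trans (dGH_le _ C) _.
      have := ler0n R j; nra.
    rewrite -EFinD lee_fin kE.
    rewrite -addnn !natrD ?addr0. have := ler0n R j. rewrite /c. lra.
  + rewrite kE -doubleS GHXk_even GHXk_odd in hk.
    have C1 := @coup_from_map R _ _ _ _ _ _ (@dis_iter R _ _ (g \o f) (c + c) j.+1 hgf).
    have C2 := coup_sym (sA _) (sA _) (coup_of_dGH hk t0).
    have C3 := @coup_from_map R _ _ _ _ _ _
      (@dis_comp R _ _ _ _ _ _ _ g _ _ (@dis_iter R _ _ (f \o g) (c + c) j hfg) hg).
    have C3' := coup_sym sB (sA _) C3.
    have C := coup_nets mX mY nX nY (coup_comp (coup_comp C1 C2) C3').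
    apply: le_trans (dGH_le _ C) _.
      have := ler0n R j; rewrite -addn1 natrD; nra.
    rewrite -EFinD lee_fin kE.
    rewrite -addn1 -addnn !natrD ?addr0. have := ler0n R j. rewrite /c. lra.
- rewrite mulry gtr0_sg ?invr_gt0 // mul1e mulry gtr0_sg ?ltr0n ?addn1 // mul1e.
  by rewrite addye // leey.
- have H0 : (0 <= maxe (ereal_inf [set GHdis dX dY φ | φ in [set: TX -> TY]])
               (ereal_inf [set GHdis dY dX ψ | ψ in [set: TY -> TX]]))%E.
    by apply: le_trans I10 _; rewrite le_max lexx.
  by rewrite hM in H0.
Qed.
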